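(* Let $s\in(\frac12,1)$, $N\ge2$, and let $\Gamma_1,\Gamma_2,\Omega,U$, $L$ and $C^+$ be as in the context. Then $U(x+y)\ge U(x)$ for all $x\in\mathbb R^N$ and all $y\in C^+$.
   Context: Notation: $S^{N-1}$ unit sphere. $\phi\in C^{1,1}(x_0)$ means there are $p\in\mathbb R^N$, $M,\eta_0>0$ with $|\phi(x_0+x)-\phi(x_0)-p\cdot x|\le M|x|^2$ for $|x|<\eta_0$; $\nabla\phi(x_0):=p$. Infinity fractional Laplacian: if $\nabla\phi(x)\ne0$, $v=\nabla\phi(x)/|\nabla\phi(x)|$, $\Delta^s_\infty\phi(x)=\int_0^\infty\frac{\phi(x+\eta v)+\phi(x-\eta v)-2\phi(x)}{\eta^{1+2s}}d\eta$; if $\nabla\phi(x)=0$, $\Delta^s_\infty\phi(x)=\sup_{y\in S^{N-1}}\int_0^\infty\frac{\phi(x+\eta y)-\phi(x)}{\eta^{1+2s}}d\eta+\inf_{z\in S^{N-1}}\int_0^\infty\frac{\phi(x-\eta z)-\phi(x)}{\eta^{1+2s}}d\eta$. An upper semicontinuous $u$ is a subsolution at $x_0$ if whenever $r>0$, $\phi\in C^{1,1}(x_0)\cap C(\overline{B_r(x_0)})$, $\phi(x_0)=u(x_0)$, $\phi>u$ on $B_r(x_0)\setminus\{x_0\}$, the function $\tilde u$ equal to $\phi$ on $B_r(x_0)$ and $u$ elsewhere satisfies $\Delta^s_\infty\tilde u(x_0)\ge0$. Setting: $x=(x_1,\hat x)$, $\hat x\in\mathbb R^{N-1}$; $\Gamma_1,\Gamma_2:\mathbb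 R^{N-1}\to\mathbb R$ are $C^{1,1}$ with $0\le\Gamma_1\le\Gamma_2\le M$, $\Gamma_2-\Gamma_1\ge m$ for constants $M>m>0$, and $\sup_{\hat x}|\partial_k\Gamma_i|+|\partial_l\partial_k\Gamma_i|\le C_1$ for all $i,k,l$. $L$ is a common Lipschitz constant of $\Gamma_1,\Gamma_2$, $\theta=\operatorname{arccot}(L)\in(0,\pi/2)$, $C^+=\{x\ne0:\cos\theta<x\cdot e_1/|x|\le1\}$. $\Omega=\{\Gamma_1(\hat x)<x_1<\Gamma_2(\hat x)\}$, $\Omega^{c,-}=\{x_1\le\Gamma_1(\hat x)\}$, $\Omega^{c,+}=\{x_1\ge\Gamma_2(\hat x)\}$. $\mathcal F$ is the set of upper semicontinuous $u:\mathbb R^N\to\mathbb R$, continuous in $\Omega$, that are subsolutions at every point of $\Omega$ and satisfy $u\le0$ on $\Omega^{c,-}$, $u\le1$ on $\Omega\cup\Omega^{c,+}$; $U=\sup_{u\in\mathcal F}u$ pointwise. *)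

(* Defs.v *)
(* R^N is represented as 'rV[R]_n.+1 with N = n.+1. *)
From HB Require Import structures.
From mathcomp Require Import all_boot all_order all_algebra.
From mathcomp Require Import all_classical all_reals all_analysis.
Set Implicit Arguments. Unset Strict Implicit. Unset Printing Implicit Defensive.
Import Order.TTheory GRing.Theory Num.Theory.
Import numFieldNormedType.Exports.
Local Open Scope classical_set_scope.
Local Open Scope ring_scope.

Section Defs.
Context {R : realType}.

Definition dotv {m : nat} (x y : 'rV[R]_m) : R := \sum_(i < m) x ord0 i * y ord0 i.
Definition enorm {m : nat} (x : 'rV[R]_m) : R := Num.sqrt (dotv x x).
Definition usphere (m : nat) : set 'rV[R]_m := [set y | enorm y = 1].
Definition ecoord {m : nat} (k : 'I_m) : 'rV[R]_m := delta_mx ord0 k.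

Context {n : nat}.
Local Notation vec := 'rV[R]_n.+1.

Definition x1 (x : vec) : R := x ord0 ord0.
Definition xhat (x : vec) : 'rV[R]_n := \row_(i < n) x ord0 (lift ord0 i).

(* phi \in C^{1,1}(x0) with \nabla phi(x0) = p *)
Definition C11_at (phi : vec -> R) (x0 p : vec) : Prop :=
  exists M eta0 : R, 0 < M /\ 0 < eta0 /\
    forall x : vec, enorm x < eta0 ->
      `|phi (x0 + x) - phi x0 - dotv p x| <= M * enorm x ^+ 2.

Definition ray_int (s : R) (g : R -> R) : \bar R :=
  (\int[@lebesgue_measure R]_(e in [set e : R | (0 < e)%R]) (g e / powR e (1 + 2 * s))%:E)%E.

(* infinity fractional Laplacian of w at x, where p = \nabla w(x) *)
Definition inf_frac_lap (s : R) (w : vec -> R) (x p : vec) : \bar R :=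
  if p != 0 then
    let v := (enorm p)^-1 *: p in
    ray_int s (fun e => w (x + e *: v) + w (x - e *: v) - 2 * w x)
  else
    (ereal_sup [set ray_int s (fun e => (w (x + e *: y) - w x)%R) | y in (@usphere n.+1)]
     + ereal_inf [set ray_int s (fun e => (w (x - e *: z) - w x)%R) | z in (@usphere n.+1)])%E.

Definition usc (u : vec -> R) : Prop :=
  forall x (e : R), 0 < e -> exists d : R, 0 < d /\
    forall y, enorm (y - x) < d -> u y < u x + e.

Definition cont_on_cball (phi : vec -> R) (x0 : vec) (r : R) : Prop :=
  forall y, enorm (y - x0) <= r -> forall e : R, 0 < e -> exists d : R, 0 < d /\
    forall z, enorm (z - x0) <= r -> enorm (z - y) < d -> `|phi z - phi y| < e.

Definition glue (phi u : vec -> R) (x0 : vec) (r : R) : vec -> R :=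
  fun y => if enorm (y - x0) < r then phi y else u y.

Definition subsolution_at (s : R) (u : vec -> R) (x0 : vec) : Prop :=
  forall (r : R) (phi : vec -> R) (p : vec),
    0 < r -> C11_at phi x0 p -> cont_on_cball phi x0 r ->
    phi x0 = u x0 ->
    (forall y, enorm (y - x0) < r -> y != x0 -> phi y > u y) ->
    (0 <= inf_frac_lap s (glue phi u x0 r) x0 p)%E.

Definition Omega (G1 G2 : 'rV[R]_n -> R) : set vec :=
  [set x | G1 (xhat x) < x1 x < G2 (xhat x)].
Definition Omega_c_minus (G1 : 'rV[R]_n -> R) : set vec :=
  [set x | x1 x <= G1 (xhat x)].
Definition Omega_c_plus (G2 : 'rV[R]_n -> R) : set vec :=
  [set x | G2 (xhat x) <= x1 x].

Definition cont_in (D : set vec) (u : vec -> R) : Prop :=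
  forall x, D x -> forall e : R, 0 < e -> exists d : R, 0 < d /\
    forall y, D y -> enorm (y - x) < d -> `|u y - u x| < e.

Definition Fam (s : R) (G1 G2 : 'rV[R]_n -> R) : set (vec -> R) :=
  [set u | usc u /\ cont_in (Omega G1 G2) u /\
           (forall x, Omega G1 G2 x -> subsolution_at s u x) /\
           (forall x, Omega_c_minus G1 x -> u x <= 0) /\
           (forall x, Omega G1 G2 x \/ Omega_c_plus G2 x -> u x <= 1)].

Definition Usup (s : R) (G1 G2 : 'rV[R]_n -> R) (x : vec) : \bar R :=
  ereal_sup [set (u x)%:E | u in Fam s G1 G2].

(* C^+ with theta = arccot L = pi/2 - atan L *)
Definition Cplus (L : R) : set vec :=
  [set y | y != 0 /\ cos (pi / 2 - atan L) < x1 y / enorm y <= 1].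

Definition partials_bounded (G : 'rV[R]_n -> R) (C1 : R) : Prop :=
  forall (k l : 'I_n) (a : 'rV[R]_n),
    derivable G a (ecoord k) /\
    derivable (fun b => derive G b (ecoord k)) a (ecoord l) /\
    `|derive G a (ecoord k)| + `|derive (fun b => derive G b (ecoord k)) a (ecoord l)| <= C1.

Definition lipschitz_e (G : 'rV[R]_n -> R) (L : R) : Prop :=
  forall a b, `|G a - G b| <= L * enorm (a - b).

End Defs.

(* Main.v *)
Require Import Defs.
From HB Require Import structures.
From mathcomp Require Import all_boot all_order all_algebra.
From mathcomp Require Import all_classical all_reals all_analysis.
From mathcomp Require Import ring lra.
Import Order.TTheory GRing.Theory Num.Theory.
Import numFieldNormedType.Exports.
Local Open Scope classical_set_scope.
Local Open Scope ring_scope.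

Lemma x1B (R : realType) (n : nat) (a b : 'rV[R]_n.+1) : x1 (a - b) = x1 a - x1 b.
Proof. by rewrite /x1 !mxE. Qed.

Lemma xhatB (R : realType) (n : nat) (a b : 'rV[R]_n.+1) : xhat (a - b) = xhat a - xhat b.
Proof. by apply/rowP => i; rewrite !mxE. Qed.

Lemma dotv_ge0 (R : realType) (m : nat) (c : 'rV[R]_m) : 0 <= dotv c c.
Proof. by apply: sumr_ge0 => i _; rewrite -expr2 sqr_ge0. Qed.

Lemma dotv_split (R : realType) (n : nat) (c : 'rV[R]_n.+1) :
  dotv c c = x1 c ^+ 2 + dotv (xhat c) (xhat c).
Proof.
rewrite /dotv big_ord_recl expr2; congr (_ + _).
by apply: eq_bigr => i _; rewrite !mxE.
Qed.

Lemma enorm_ge0 (R : realType) (m : nat) (c : 'rV[R]_m) : 0 <= enorm c.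
Proof. exact: sqrtr_ge0. Qed.

Lemma enorm_sqr (R : realType) (m : nat) (c : 'rV[R]_m) : enorm c ^+ 2 = dotv c c.
Proof. by rewrite /enorm sqr_sqrtr // dotv_ge0. Qed.

Lemma enorm_x1 (R : realType) (n : nat) (c : 'rV[R]_n.+1) : `|x1 c| <= enorm c.
Proof.
rewrite /enorm -sqrtr_sqr ler_sqrt ?dotv_ge0 // dotv_split.
by rewrite lerDl dotv_ge0.
Qed.

Lemma enorm_xhat (R : realType) (n : nat) (c : 'rV[R]_n.+1) : enorm (xhat c) <= enorm c.
Proof.
rewrite /enorm ler_sqrt ?dotv_ge0 // dotv_split.
by rewrite lerDr sqr_ge0.
Qed.

Lemma cone_bound (R : realType) (n : nat) (L : R) (y : 'rV[R]_n.+1) :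
  0 < L -> Cplus L y -> L * enorm (xhat y) < x1 y.
Proof.
move=> L0 [_ /andP [hc _]].
have cpos : 0 < Num.sqrt (1 + L ^+ 2) by rewrite sqrtr_gt0; apply: ltr_wpDr; [rewrite sqr_ge0|].
have E : cos (pi / 2 - atan L) = L / Num.sqrt (1 + L ^+ 2).
  rewrite -opprB cosN cosBpihalf.
  have cA : cos (atan L) != 0 by rewrite cos_atan invr_eq0 gt_eqF.
  have -> : sin (atan L) = tan (atan L) * cos (atan L) by rewrite /tan divfK.
  by rewrite atanK cos_atan.
rewrite E in hc.
set c := Num.sqrt (1 + L ^+ 2) in cpos hc.
set N := enorm y in hc.
set a := enorm (xhat y).
set b := x1 y in hc *.
have N0 : 0 <= N by exact: enorm_ge0.
have Lc0 : 0 < L / c by rewrite divr_gt0.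
have Npos : 0 < N.
  rewrite lt_neqAle N0 andbT; apply/negP => /eqP N0'.
  by move: hc; rewrite -N0' invr0 mulr0 => /(lt_trans Lc0); rewrite ltxx.
have hLN : L * N < b * c.
  have eL : L = (L / c) * c by rewrite divfK // gt_eqF.
  have eb : b = (b / N) * N by rewrite divfK // gt_eqF.
  rewrite [in X in X < _]eL [in X in _ < X]eb.
  move: hc; set A := L / c; set B := b / N => hAB.
  have hcN := mulr_gt0 cpos Npos; nra.
have a0 : 0 <= a by exact: enorm_ge0.
have c2 : c ^+ 2 = 1 + L ^+ 2 by rewrite sqr_sqrtr // addr_ge0 // sqr_ge0.
have N2 : N ^+ 2 = b ^+ 2 + a ^+ 2 by rewrite /N /a !enorm_sqr dotv_split.
have bpos : 0 < b by nra.
have LN0 : 0 <= L * N by rewrite mulr_ge0 // ltW.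
have h2 : (L * N) ^+ 2 < (b * c) ^+ 2 by rewrite ltr_pXn2r // ?nnegrE ?mulr_ge0 // ltW.
rewrite !exprMn N2 c2 in h2.
have h3 : (L * a) ^+ 2 < b ^+ 2 by rewrite exprMn; lra.
have La0 : 0 <= L * a by rewrite mulr_ge0 // ltW.
nra.
Qed.

Lemma lip_abs (R : realType) (n : nat) (G : 'rV[R]_n -> R) (L : R) (a b : 'rV[R]_n.+1) :
  0 <= L -> lipschitz_e G L ->
  - (L * enorm (b - a)) <= G (xhat b) - G (xhat a) <= L * enorm (b - a).
Proof.
move=> L0 hG; rewrite -ler_norml; apply: (le_trans (hG _ _)).
by rewrite ler_wpM2l // -xhatB enorm_xhat.
Qed.

Lemma shift_lt (R : realType) (n : nat) (G : 'rV[R]_n -> R) (L : R) (y z : 'rV[R]_n.+1) :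
  lipschitz_e G L -> L * enorm (xhat y) < x1 y ->
  x1 (z - y) - G (xhat (z - y)) < x1 z - G (xhat z).
Proof.
move=> hG hy; rewrite x1B xhatB.
have := hG (xhat z) (xhat z - xhat y).
rewrite opprB addrCA subrr addr0 => h.
have := ler_norm (G (xhat z) - G (xhat z - xhat y)).
lra.
Qed.

Lemma Omega_open (R : realType) (n : nat) (G1 G2 : 'rV[R]_n -> R) (L : R) (a : 'rV[R]_n.+1) :
  0 < L -> lipschitz_e G1 L -> lipschitz_e G2 L -> Omega G1 G2 a ->
  exists d, 0 < d /\ forall b, enorm (b - a) < d -> Omega G1 G2 b.
Proof.
move=> L0 h1 h2 /andP [ha1 ha2].
set al := x1 a - G1 (xhat a); set be := G2 (xhat a) - x1 a.
have al0 : 0 < al by rewrite subr_gt0.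
have be0 : 0 < be by rewrite subr_gt0.
have L1 : 0 < 1 + L by rewrite addr_gt0.
exists (Num.min al be / (1 + L)); split.
  by rewrite divr_gt0 // lt_min al0 be0.
move=> b hb.
have k0 := enorm_ge0 _ _ (b - a).
set k := enorm (b - a) in hb k0.
have hk : k * (1 + L) < Num.min al be by rewrite -ltr_pdivlMr.
move: hk; rewrite lt_min => /andP [hka hkb].
have hx := enorm_x1 _ _ (b - a); rewrite x1B -/k in hx.
move: hx; rewrite ler_norml => /andP [hx1 hx2].
have /andP [g1a g1b] := lip_abs _ _ _ _ a b (ltW L0) h1.
have /andP [g2a g2b] := lip_abs _ _ _ _ a b (ltW L0) h2.
rewrite -/k in g1a g1b g2a g2b.
rewrite /Omega /=; apply/andP; split; rewrite /al /be in hka hkb; nra.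
Qed.

Lemma integral_mono (R : realType) d (T : measurableType d) (mu : {measure set T -> \bar R}) (D : set T) (f g : T -> \bar R) :
  (forall x, (f x <= g x)%E) -> (integral mu D f <= integral mu D g)%E.
Proof.
move=> fg.
have fgD : forall x, ((f \_ D) x <= (g \_ D) x)%E.
  by move=> x; rewrite /patch; case: ifP.
rewrite /integral; apply: leeD.
  apply: ge_ereal_sup => _ [h /= hf <-]; apply: ereal_sup_ubound; exists h => //= x.
  apply: (le_trans (hf x)); apply: (@funepos_le _ _ setT); last by rewrite in_setT.
  by move=> z _; exact: fgD.
rewrite leeN2.
apply: ge_ereal_sup => _ [h /= hf <-]; apply: ereal_sup_ubound; exists h => //= x.
apply: (le_trans (hf x)); apply: (@funeneg_le _ _ setT); last by rewrite in_setT.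
by move=> z _; exact: fgD.
Qed.

Lemma ray_int_mono (R : realType) (s : R) (g1 g2 : R -> R) :
  (forall e, g1 e <= g2 e) -> (ray_int s g1 <= ray_int s g2)%E.
Proof.
move=> h; apply: integral_mono => e; rewrite lee_fin.
by apply: ler_wpM2r; [rewrite invr_ge0 powR_ge0|].
Qed.

Lemma ray_int_ge0 (R : realType) (s : R) (g : R -> R) :
  (forall e, 0 <= g e) -> (0 <= ray_int s g)%E.
Proof.
move=> h; apply: integral_ge0 => e _; rewrite lee_fin.
by apply: divr_ge0 => //; rewrite powR_ge0.
Qed.

Lemma ifl_mono (R : realType) (n : nat) (s : R) (w1 w2 : 'rV[R]_n.+1 -> R) x p :
  (forall q, w1 q <= w2 q) -> w1 x = w2 x ->
  (inf_frac_lap s w1 x p <= inf_frac_lap s w2 x p)%E.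
Proof.
move=> h hx; rewrite /inf_frac_lap; case: ifP => _.
  by apply: ray_int_mono => e; rewrite hx; apply: lerB => //; apply: lerD.
apply: leeD.
  apply: ge_ereal_sup => _ [v Sv <-].
  apply: (@le_trans _ _ (ray_int s (fun e => w2 (x + e *: v) - w2 x))).
    by apply: ray_int_mono => e; rewrite hx; apply: lerB.
  by apply: ereal_sup_ubound; exists v.
apply: le_ereal_inf_tmp => _ [v Sv <-].
apply: (@le_trans _ _ (ray_int s (fun e => w1 (x - e *: v) - w1 x))).
  by apply: ereal_inf_lbound; exists v.
by apply: ray_int_mono => e; rewrite hx; apply: lerB.
Qed.

Lemma ifl_shift (R : realType) (n : nat) (s : R) (f : 'rV[R]_n.+1 -> R) z y p :
  inf_frac_lap s (fun q => f (q + y)) (z - y) p = inf_frac_lap s f z p.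
Proof.
have E1 a : z - y + a + y = z + a by rewrite addrAC subrK.
have E2 : z - y + y = z by rewrite subrK.
rewrite /inf_frac_lap; case: ifP => _.
  by congr (ray_int _ _); apply: funext => e /=; rewrite !E1 E2.
congr (ereal_sup _ + ereal_inf _)%E; apply: eq_imagel => v _;
  by congr (ray_int _ _); apply: funext => e; rewrite E1 E2.
Qed.

Lemma usphere_nonempty (R : realType) (n : nat) : exists v : 'rV[R]_n.+1, @usphere R n.+1 v.
Proof.
exists (ecoord ord0); rewrite /usphere /= /enorm /dotv /ecoord.
rewrite (bigD1 ord0) //= big1 ?addr0; last first.
  by move=> i /negbTE hi; rewrite !mxE hi /= mulr0.
by rewrite !mxE eqxx /= mulr1 sqrtr1.
Qed.

Lemma ifl_min (R : realType) (n : nat) (s : R) (W : 'rV[R]_n.+1 -> R) x p :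
  (forall q, W x <= W q) -> (0 <= inf_frac_lap s W x p)%E.
Proof.
move=> h; rewrite /inf_frac_lap; case: ifP => _.
  apply: ray_int_ge0 => e; rewrite subr_ge0 mulr2n mulrDl mul1r.
  by apply: lerD.
apply: adde_ge0.
  have [v Sv] := usphere_nonempty R n.
  apply: (@le_trans _ _ (ray_int s (fun e => W (x + e *: v) - W x))).
    by apply: ray_int_ge0 => e; rewrite subr_ge0.
  by apply: ereal_sup_ubound; exists v.
apply: le_ereal_inf_tmp => _ [v Sv <-].
by apply: ray_int_ge0 => e; rewrite subr_ge0.
Qed.

Lemma maxP' (R : realType) (a b : R) :
  a <= Num.max a b /\ b <= Num.max a b /\ (Num.max a b = a \/ Num.max a b = b).
Proof.
split; first by rewrite le_max lexx.
split; first by rewrite le_max lexx orbT.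
by case: (leP a b) => h; [right | left].
Qed.

Lemma max_dist (R : realType) (a b c d e : R) :
  `|a - c| < e -> `|b - d| < e -> `|Num.max a b - Num.max c d| < e.
Proof.
rewrite !ltr_distl => /andP [h1 h2] /andP [h3 h4].
have [m1 [m2 [E|E]]] := maxP' _ a b; have [m3 [m4 [F|F]]] := maxP' _ c d;
  rewrite ?E ?F in m1 m2 m3 m4 *; apply/andP; split; lra.
Qed.

Lemma shiftB (R : realType) (n : nat) (q x y : 'rV[R]_n.+1) : (q - y) - (x - y) = q - x.
Proof. by rewrite opprB addrA subrK. Qed.

Lemma shiftD (R : realType) (n : nat) (q x y : 'rV[R]_n.+1) : (q + y) - (x + y) = q - x.
Proof. by rewrite opprD addrACA subrr addr0. Qed.

Lemma enorm0 (R : realType) (n : nat) : enorm (0 : 'rV[R]_n.+1) = 0.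
Proof.
rewrite /enorm /dotv big1 ?sqrtr0 // => i _; by rewrite mxE mulr0.
Qed.

Lemma usc_max (R : realType) (n : nat) (u v : 'rV[R]_n.+1 -> R) :
  usc u -> usc v -> usc (fun q => Num.max (u q) (v q)).
Proof.
move=> hu hv x e e0.
have [d1 [d10 h1]] := hu x e e0; have [d2 [d20 h2]] := hv x e e0.
exists (Num.min d1 d2); split; first by rewrite lt_min d10 d20.
move=> q; rewrite lt_min => /andP [q1 q2].
have := h1 q q1; have := h2 q q2.
have [m1 [m2 [E|E]]] := maxP' _ (u q) (v q); have [m3 [m4 _]] := maxP' _ (u x) (v x);
  rewrite ?E; lra.
Qed.

Lemma usc_shift (R : realType) (n : nat) (u : 'rV[R]_n.+1 -> R) y :
  usc u -> usc (fun q => u (q - y)).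
Proof.
move=> hu x e e0; have [d [d0 h]] := hu (x - y) e e0.
by exists d; split => // q hq; apply: h; rewrite shiftB.
Qed.

Lemma usc_cst (R : realType) (n : nat) (c : R) : usc (fun _ : 'rV[R]_n.+1 => c).
Proof. by move=> x e e0; exists 1; split => // q _; rewrite ltrDl. Qed.

Lemma cont_max (R : realType) (n : nat) (D : set 'rV[R]_n.+1) (u v : 'rV[R]_n.+1 -> R) :
  cont_in D u -> cont_in D v -> cont_in D (fun q => Num.max (u q) (v q)).
Proof.
move=> hu hv x Dx e e0.
have [d1 [d10 h1]] := hu x Dx e e0; have [d2 [d20 h2]] := hv x Dx e e0.
exists (Num.min d1 d2); split; first by rewrite lt_min d10 d20.
move=> q Dq; rewrite lt_min => /andP [q1 q2].
by apply: max_dist; [apply: h1 | apply: h2].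
Qed.

Definition wdef {R : realType} {n : nat} (u : 'rV[R]_n.+1 -> R) (y : 'rV[R]_n.+1) :=
  fun q => Num.max (u q) (Num.max (u (q - y)) 0).

Lemma outside_minus (R : realType) (n : nat) (G1 G2 : 'rV[R]_n -> R) (L : R) (y z : 'rV[R]_n.+1) :
  lipschitz_e G2 L -> L * enorm (xhat y) < x1 y -> Omega G1 G2 z ->
  ~ Omega G1 G2 (z - y) -> Omega_c_minus G1 (z - y).
Proof.
move=> h2 hy /andP [_ hz] hout.
have := shift_lt _ _ _ _ _ z h2 hy.
move=> hs; rewrite /Omega_c_minus /= leNgt; apply/negP => hlt.
apply: hout; rewrite /Omega /=; rewrite hlt /=; lra.
Qed.

Lemma cont_v (R : realType) (n : nat) (G1 G2 : 'rV[R]_n -> R) (L : R) (y : 'rV[R]_n.+1)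
  (u : 'rV[R]_n.+1 -> R) :
  0 < L -> lipschitz_e G1 L -> lipschitz_e G2 L -> L * enorm (xhat y) < x1 y ->
  usc u -> cont_in (Omega G1 G2) u -> (forall x, Omega_c_minus G1 x -> u x <= 0) ->
  cont_in (Omega G1 G2) (fun q => Num.max (u (q - y)) 0).
Proof.
move=> L0 h1 h2 hy hu hc hm z Dz e e0.
have [hin|hout] := boolP (G1 (xhat (z - y)) < x1 (z - y) < G2 (xhat (z - y))).
  have [d1 [d10 hd1]] := Omega_open _ _ _ _ _ (z - y) L0 h1 h2 hin.
  have [d2 [d20 hd2]] := hc (z - y) hin e e0.
  exists (Num.min d1 d2); split; first by rewrite lt_min d10 d20.
  move=> q Dq; rewrite lt_min => /andP [q1 q2].
  apply: max_dist; last by rewrite subrr normr0.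
  by apply: hd2; [apply: hd1; rewrite shiftB | rewrite shiftB].
have hneg : u (z - y) <= 0.
  by apply: hm; apply: (outside_minus _ _ _ _ _ _ _ h2 hy Dz); move=> /= H; rewrite H in hout.
have [d [d0 hd]] := hu (z - y) e e0.
exists d; split => // q Dq hq.
have := hd (q - y); rewrite shiftB => /(_ hq) hl.
have [m1 [m2 [E|E]]] := maxP' _ (u (q - y)) 0; have [m3 [m4 [F|F]]] := maxP' _ (u (z - y)) 0;
  rewrite ?E ?F in m1 m2 m3 m4 *; rewrite ltr_distl; apply/andP; split; lra.
Qed.

Lemma u_le1 (R : realType) (n : nat) (s : R) (G1 G2 : 'rV[R]_n -> R) (u : 'rV[R]_n.+1 -> R) q :
  Fam s G1 G2 u -> u q <= 1.
Proof.
move=> [_ [_ [_ [hm hp]]]].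
have [h|h] := leP (x1 q) (G1 (xhat q)).
  by apply: (le_trans (hm q h)).
apply: hp; have [h'|h'] := ltP (x1 q) (G2 (xhat q)).
  by left; rewrite /Omega /= h h'.
by right.
Qed.

Lemma glue_center (R : realType) (n : nat) (phi u : 'rV[R]_n.+1 -> R) z r :
  0 < r -> Defs.glue phi u z r z = phi z.
Proof. by move=> r0; rewrite /Defs.glue subrr enorm0 r0. Qed.

Lemma glue_mono (R : realType) (n : nat) (phi u v : 'rV[R]_n.+1 -> R) z r :
  (forall q, u q <= v q) -> forall q, Defs.glue phi u z r q <= Defs.glue phi v z r q.
Proof. by move=> h q; rewrite /Defs.glue; case: ifP. Qed.

Lemma sub_w (R : realType) (n : nat) (s : R) (G1 G2 : 'rV[R]_n -> R) (L : R) (y : 'rV[R]_n.+1)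
  (u : 'rV[R]_n.+1 -> R) z :
  lipschitz_e G2 L -> L * enorm (xhat y) < x1 y ->
  Fam s G1 G2 u -> Omega G1 G2 z -> subsolution_at s (wdef u y) z.
Proof.
move=> h2 hy hF Dz.
have [_ [_ [hsub [hm _]]]] := hF.
move=> r phi p r0 hC hcont hphi hgt.
have uw q : u q <= wdef u y q by rewrite /wdef le_max lexx.
have uyw q : u (q - y) <= wdef u y q by rewrite /wdef !le_max lexx orbT.
have w0 q : 0 <= wdef u y q by rewrite /wdef !le_max lexx !orbT.
have caseC : wdef u y z = 0 -> (0 <= inf_frac_lap s (Defs.glue phi (wdef u y) z r) z p)%E.
  move=> wz0; apply: ifl_min => q; rewrite glue_center // hphi wz0 /Defs.glue.
  case: ifP => // hq; have [->|hne] := eqVneq q z; first by rewrite hphi wz0.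
  by apply: ltW; apply: (le_lt_trans (w0 q)); apply: hgt => //; rewrite hq.
have [m1 [m2 [E|E]]] := maxP' _ (u z) (Num.max (u (z - y)) 0).
-
  have hA := hsub z Dz r phi p r0 hC hcont.
  have pu : phi z = u z by rewrite hphi /wdef E.
  apply: (le_trans (hA pu _)).
    move=> q hq hne; apply: (le_lt_trans (uw q)); exact: hgt.
  apply: ifl_mono; first exact: glue_mono.
  by rewrite !glue_center.
have [m3 [m4 [F|F]]] := maxP' _ (u (z - y)) 0; last first.
  by apply: caseC; rewrite /wdef E F.
have [hin|hout] := boolP (G1 (xhat (z - y)) < x1 (z - y) < G2 (xhat (z - y))); last first.
  have hneg : u (z - y) <= 0.
    by apply: hm; apply: (outside_minus _ _ _ _ _ _ _ h2 hy Dz); move=> /= H; rewrite H in hout.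
  apply: caseC; rewrite /wdef E F; apply/eqP; rewrite eq_le hneg /=.
  by move: m4; rewrite F.
pose phi' := fun q => phi (q + y).
have E1 a : z - y + a + y = z + a by rewrite addrAC subrK.
have E2 : z - y + y = z by rewrite subrK.
have e3 a : a + y - z = a - (z - y) by rewrite -[in X in X = _]E2 shiftD.
have hB := hsub (z - y) hin r phi' p r0.
have hC' : C11_at phi' (z - y) p.
  move: hC => [M [et [M0 [et0 hM]]]]; exists M, et; split => //; split => // q hq.
  by rewrite /phi' E1 E2; apply: hM.
have hcont' : cont_on_cball phi' (z - y) r.
  move=> q hq e e0.
  have := hcont (q + y); rewrite e3 => /(_ hq e e0) [d [d0 hd]].
  exists d; split => // q' hq' hq'q; rewrite /phi'; apply: hd.
    by rewrite e3.
  by rewrite shiftD.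
have hphi' : phi' (z - y) = u (z - y) by rewrite /phi' E2 hphi /wdef E F.
have hgt' : forall q, enorm (q - (z - y)) < r -> q != z - y -> u q < phi' q.
  move=> q hq hne; rewrite /phi'.
  have := uyw (q + y); rewrite addrK => h; apply: (le_lt_trans h); apply: hgt.
    by rewrite e3.
  by apply: contraNneq hne => <-; rewrite addrK.
have {}hB := hB hC' hcont' hphi' hgt'.
have eqg : Defs.glue phi' u (z - y) r = (fun q => Defs.glue phi (fun q => u (q - y)) z r (q + y)).
  apply: funext => q; rewrite /Defs.glue /phi' addrK.
  by rewrite e3.
rewrite eqg ifl_shift in hB.
apply: (le_trans hB); apply: ifl_mono; first exact: glue_mono.
by rewrite !glue_center.
Qed.

Lemma wFam (R : realType) (n : nat) (s : R) (G1 G2 : 'rV[R]_n -> R) (L : R) (y : 'rV[R]_n.+1)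
  (u : 'rV[R]_n.+1 -> R) :
  0 < L -> lipschitz_e G1 L -> lipschitz_e G2 L -> L * enorm (xhat y) < x1 y ->
  Fam s G1 G2 u -> Fam s G1 G2 (wdef u y).
Proof.
move=> L0 h1 h2 hy hF.
have [husc [hc [hsub [hm hp]]]] := hF.
split.
  by apply: usc_max => //; apply: usc_max; [apply: usc_shift | apply: usc_cst].
split.
  by apply: cont_max => //; apply: (cont_v _ _ _ _ _ _ _ L0 h1 h2 hy).
split.
  by move=> z Dz; apply: (sub_w _ _ _ _ _ _ _ _ _ h2 hy hF Dz).
split.
  move=> z hz; rewrite /wdef !ge_max (hm z hz) lexx /= andbT.
  apply: hm; rewrite /Omega_c_minus /=.
  have := shift_lt _ _ _ _ _ z h1 hy; rewrite /Omega_c_minus /= in hz; lra.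
move=> z _; rewrite /wdef !ge_max (u_le1 _ _ _ _ _ _ z hF) (u_le1 _ _ _ _ _ _ (z - y) hF) /=.
by rewrite ler01.
Qed.

Theorem proposition4p3 (R : realType) (n : nat) (s : R)
    (G1 G2 : 'rV[R]_n -> R) (M m C1 L : R) :
  (1 <= n)%N ->
  1 / 2 < s < 1 ->
  0 < m -> m < M ->
  (forall a, 0 <= G1 a) -> (forall a, G1 a <= G2 a) -> (forall a, G2 a <= M) ->
  (forall a, m <= G2 a - G1 a) ->
  partials_bounded G1 C1 -> partials_bounded G2 C1 ->
  0 < L -> lipschitz_e G1 L -> lipschitz_e G2 L ->
  forall (x y : 'rV[R]_n.+1), Cplus L y ->
    (Usup s G1 G2 x <= Usup s G1 G2 (x + y))%E.
Proof.
move=> _ _ _ _ _ _ _ _ _ _ L0 h1 h2 x y hC.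
have hy := cone_bound _ _ _ y L0 hC.
rewrite /Usup; apply: ge_ereal_sup => _ [u hu <-].
apply: (@le_trans _ _ ((wdef u y) (x + y))%:E).
  by rewrite lee_fin /wdef addrK !le_max lexx !orbT.
apply: ereal_sup_ubound; exists (wdef u y) => //.
exact: (wFam _ _ _ _ _ _ _ _ L0 h1 h2 hy hu).
Qed.
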